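(* Let $\Theta$ be the set of $p\times p$ positive-definite matrices and assume $\mu_1\ne\mu_2$. For every constant $c>0$, the matrix $A=c(\Sigma_1/n_1+\Sigma_2/n_2)^{-1}$ maximizes $\Delta(A)/\{K_2(A)\}^{1/2}$ over $A\in\Theta$, i.e. $\Delta(A)/\{K_2(A)\}^{1/2}\le \Delta(c(\Sigma_1/n_1+\Sigma_2/n_2)^{-1})/\{K_2(c(\Sigma_1/n_1+\Sigma_2/n_2)^{-1})\}^{1/2}$ for all $A\in\Theta$.
   Context: Two populations on $\mathbb{R}^p$ have mean vectors $\mu_1,\mu_2$ and positive-definite covariance matrices $\Sigma_1,\Sigma_2$; $n_1,n_2$ are positive integers (sample sizes). For positive-definite $A$: $\mu_A=A^{1/2}(\mu_1-\mu_2)$, $\Sigma_{i,A}=A^{1/2}\Sigma_iA^{1/2}$, $\Delta(A)=\|\mu_A\|^2$, $K_2(A)=4\sum_{i=1}^2\mu_A^T\Sigma_{i,A}\mu_A/n_i$. *)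

(* Defs.v *)
(* Real scalars: an arbitrary real closed field R (the reals
   are an instance). Vectors in R^p are column vectors 'cV[R]_p. *)
From HB Require Import structures.
From mathcomp Require Import all_boot all_order all_algebra.
Set Implicit Arguments. Unset Strict Implicit. Unset Printing Implicit Defensive.
Import Order.TTheory GRing.Theory Num.Theory.
Local Open Scope ring_scope.

Definition posdef (R : realFieldType) (p : nat) (A : 'M[R]_p) : Prop :=
  A^T = A /\ forall x : 'cV[R]_p, x != 0 -> 0 < (x^T *m A *m x) 0 0.

Definition is_sqrtm (R : realFieldType) (p : nat) (B A : 'M[R]_p) : Prop :=
  posdef B /\ B *m B = A.

Definition sqnorm (R : realFieldType) (p : nat) (v : 'cV[R]_p) : R :=
  \sum_i (v i 0) ^+ 2.

(* Given B = A^{1/2}:  mu_A = A^{1/2}(mu1 - mu2) *)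
Definition muA (R : realFieldType) (p : nat) (B : 'M[R]_p) (mu1 mu2 : 'cV[R]_p)
  : 'cV[R]_p := B *m (mu1 - mu2).

Definition SigmaA (R : realFieldType) (p : nat) (B S : 'M[R]_p) : 'M[R]_p :=
  B *m S *m B.

Definition Delta (R : realFieldType) (p : nat) (B : 'M[R]_p) (mu1 mu2 : 'cV[R]_p)
  : R := sqnorm (muA B mu1 mu2).

Definition K2 (R : realFieldType) (p : nat) (B : 'M[R]_p) (mu1 mu2 : 'cV[R]_p)
  (S1 S2 : 'M[R]_p) (n1 n2 : nat) : R :=
  4 * (((muA B mu1 mu2)^T *m SigmaA B S1 *m muA B mu1 mu2) 0 0 / n1%:R
     + ((muA B mu1 mu2)^T *m SigmaA B S2 *m muA B mu1 mu2) 0 0 / n2%:R).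

(* The objective Delta(A) / K_2(A)^{1/2}, with B = A^{1/2}. *)
Definition deltaK2ratio (R : rcfType) (p : nat) (B : 'M[R]_p) (mu1 mu2 : 'cV[R]_p)
  (S1 S2 : 'M[R]_p) (n1 n2 : nat) : R :=
  Delta B mu1 mu2 / Num.sqrt (K2 B mu1 mu2 S1 S2 n1 n2).

(* Main.v *)
Require Import Defs.
From HB Require Import structures.
From mathcomp Require Import all_boot all_order all_algebra.
From mathcomp Require Import ring.
Import Order.TTheory GRing.Theory Num.Theory.
Local Open Scope ring_scope.
Set Implicit Arguments. Unset Strict Implicit.

Lemma entD (R : realFieldType) m n (A B : 'M[R]_(m,n)) i j : (A + B) i j = A i j + B i j.
Proof. by rewrite mxE. Qed.
Lemma entZ (R : realFieldType) m n a (A : 'M[R]_(m,n)) i j : (a *: A) i j = a * A i j.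
Proof. by rewrite mxE. Qed.

Definition Qf (R : realFieldType) (p : nat) (S : 'M[R]_p) (x y : 'cV[R]_p) : R :=
  (x^T *m S *m y) 0 0.

Lemma Qf_ge0 (R : realFieldType) p (S : 'M[R]_p) x : posdef S -> 0 <= Qf S x x.
Proof.
move=> [_ HS]; have [->|nz] := eqVneq x 0.
  by rewrite /Qf mulmx0 mxE.
exact/ltW/HS.
Qed.

Lemma Qf_sym (R : realFieldType) p (S : 'M[R]_p) x y : S^T = S -> Qf S x y = Qf S y x.
Proof.
move=> HS; rewrite /Qf.
have -> : (x^T *m S *m y) 0 0 = ((x^T *m S *m y)^T) 0 0 by rewrite [RHS]mxE.
by rewrite !trmx_mul trmxK HS mulmxA.
Qed.

Lemma Qf_lin (R : realFieldType) p (S : 'M[R]_p) x y a b :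
  S^T = S ->
  Qf S (a *: x + b *: y) (a *: x + b *: y) =
  a ^+ 2 * Qf S x x + 2 * a * b * Qf S x y + b ^+ 2 * Qf S y y.
Proof.
move=> HS; have tr : (a *: x + b *: y)^T = a *: x^T + b *: y^T.
  by rewrite linearD /= !linearZ.
rewrite /Qf tr !mulmxDl !mulmxDr.
rewrite -?scalemxAl -?scalemxAr -?scalemxAl.
rewrite !(entD, entZ).
have := Qf_sym x y HS; rewrite /Qf => ->.
ring.
Qed.

Lemma Qf_CS (R : realFieldType) p (S : 'M[R]_p) x y :
  posdef S -> 0 < Qf S y y -> Qf S x y ^+ 2 <= Qf S x x * Qf S y y.
Proof.
move=> PS Hy; have := Qf_ge0 (Qf S y y *: x + (- Qf S x y) *: y) PS.
rewrite Qf_lin; last by case: PS.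
have -> : Qf S y y ^+ 2 * Qf S x x + 2 * Qf S y y * - Qf S x y * Qf S x y +
   (- Qf S x y) ^+ 2 * Qf S y y =
   Qf S y y * (Qf S x x * Qf S y y - Qf S x y ^+ 2) by ring.
by rewrite pmulr_rge0 // subr_ge0.
Qed.

Lemma sqnormE (R : realFieldType) p (v : 'cV[R]_p) : sqnorm v = (v^T *m v) 0 0.
Proof. by rewrite /sqnorm mxE; apply: eq_bigr => i _; rewrite mxE expr2. Qed.

Lemma DeltaE (R : realFieldType) p (B : 'M[R]_p) mu1 mu2 :
  B^T = B -> Delta B mu1 mu2 = Qf (B *m B) (mu1 - mu2) (mu1 - mu2).
Proof.
move=> HB; rewrite /Delta sqnormE /muA /Qf trmx_mul HB.
by rewrite !mulmxA.
Qed.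

Lemma K2E (R : realFieldType) p (B : 'M[R]_p) mu1 mu2 S1 S2 n1 n2 :
  B^T = B -> K2 B mu1 mu2 S1 S2 n1 n2 =
  4 * Qf ((n1%:R)^-1 *: S1 + (n2%:R)^-1 *: S2) (B *m B *m (mu1 - mu2))
        (B *m B *m (mu1 - mu2)).
Proof.
move=> HB; rewrite /K2 /Qf /muA /SigmaA; move: (mu1 - mu2) => d.
rewrite mulmxDr mulmxDl -!scalemxAr -!scalemxAl !(entD, entZ).
rewrite !trmx_mul HB !mulmxA.
congr (4 * _); rewrite mulrC [_ / n2%:R]mulrC; congr (_ * _ + _ * _).
Qed.

Theorem propositionS1p1 (R : rcfType) (p : nat) (mu1 mu2 : 'cV[R]_p)
  (S1 S2 : 'M[R]_p) (n1 n2 : nat) (c : R) :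
  posdef S1 -> posdef S2 -> (0 < n1)%N -> (0 < n2)%N -> mu1 != mu2 -> 0 < c ->
  forall (A0 B0 : 'M[R]_p),
    A0 = c *: invmx ((n1%:R)^-1 *: S1 + (n2%:R)^-1 *: S2) ->
    is_sqrtm B0 A0 ->
  forall (A B : 'M[R]_p), posdef A -> is_sqrtm B A ->
    deltaK2ratio B mu1 mu2 S1 S2 n1 n2 <= deltaK2ratio B0 mu1 mu2 S1 S2 n1 n2.
Proof.
move=> [T1 P1] [T2 P2] n1p n2p neq cp A0 B0 HA0 [[TB0 _] EB0] A B PA [[TB _] EB].
set Sg := (n1%:R)^-1 *: S1 + (n2%:R)^-1 *: S2.
set d := mu1 - mu2.
have dnz : d != 0 by rewrite subr_eq0.
have i1 : 0 < (n1%:R : R)^-1 by rewrite invr_gt0 ltr0n.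
have i2 : 0 < (n2%:R : R)^-1 by rewrite invr_gt0 ltr0n.
have TS : Sg^T = Sg.
  have -> : Sg^T = (n1%:R)^-1 *: S1^T + (n2%:R)^-1 *: S2^T by rewrite /Sg linearD /= !linearZ.
  by rewrite T1 T2.
have PS : posdef Sg.
  split => // x xnz.
  rewrite mulmxDr mulmxDl -!scalemxAr -!scalemxAl !(entD, entZ).
  by rewrite addr_gt0 // mulr_gt0 // ?P1 ?P2.
have US : Sg \in unitmx.
  rewrite unitmxE unitfE; apply/negP => /det0P [v vnz vS].
  have : 0 < Qf Sg v^T v^T.
    by apply: PS.2; apply: contra vnz => /eqP/(congr1 trmx); rewrite trmxK linear0 => ->.
  by rewrite /Qf trmxK vS mul0mx mxE ltxx.
set Si := invmx Sg.
have TSi : Si^T = Si by rewrite /Si trmx_inv TS.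
set x := Si *m d.
have xT : x^T = d^T *m Si by rewrite /x trmx_mul TSi.
have xnz : x != 0.
  apply: contra dnz => /eqP x0.
  by rewrite -[d]mul1mx -(mulmxV US) -mulmxA -/Si -/x x0 mulmx0.
set q := Qf Sg x x.
have qp : 0 < q by apply: PS.2.
have qE : q = (d^T *m Si *m d) 0 0.
  by rewrite /q /Qf xT /x -!mulmxA (mulmxA Sg) (mulmxV US) mul1mx.
have AB0 : B0 *m B0 = c *: Si by rewrite EB0 HA0.
have D0 : Delta B0 mu1 mu2 = c * q.
  by rewrite DeltaE // AB0 /Qf -/d -scalemxAr -scalemxAl entZ qE.
have K0 : K2 B0 mu1 mu2 S1 S2 n1 n2 = 4 * (c ^+ 2 * q).
  rewrite K2E // AB0 -/Sg -/d -scalemxAl -/x.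
  have := Qf_lin x x c 0 TS; rewrite scale0r addr0 => ->.
  rewrite -/q; ring.
set u := B *m B *m d.
set a := Qf (B *m B) d d.
have aE : a = (d^T *m u) 0 0 by rewrite /a /Qf /u mulmxA.
have ap : 0 < a by rewrite /a EB; apply: PA.2.
have unz : u != 0 by apply: contraTneq ap => u0; rewrite aE u0 mulmx0 mxE ltxx.
set k := Qf Sg u u.
have kp : 0 < k by apply: PS.2.
have xu : Qf Sg x u = a.
  by rewrite aE /Qf xT /x -!mulmxA (mulmxA Si) (mulVmx US) mul1mx.
have CS : a ^+ 2 <= q * k by rewrite -xu; apply: Qf_CS.
rewrite /deltaK2ratio D0 K0 DeltaE // K2E // -/d -/u -/a -/Sg -/k.
have s1 : 0 < Num.sqrt (4 * k) by rewrite sqrtr_gt0 mulr_gt0.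
have s2 : 0 < Num.sqrt (4 * (c ^+ 2 * q)).
  by rewrite sqrtr_gt0 !mulr_gt0 // exprn_gt0.
have k0 : 0 <= 4 * k by rewrite mulr_ge0 // ltW.
have c0 : 0 <= 4 * (c ^+ 2 * q) by rewrite !mulr_ge0 ?exprn_ge0 // ltW.
rewrite -ler_sqr ?nnegrE; last 2 first.
- by rewrite divr_ge0 // ltW.
- by rewrite divr_ge0 ?mulr_ge0 // ltW.
rewrite !expr_div_n !sqr_sqrtr //.
have -> : (c * q) ^+ 2 / (4 * (c ^+ 2 * q)) = q / 4.
  by field; rewrite ?gt_eqF // ?exprn_gt0 // ?mulr_gt0 // ?exprn_gt0.
rewrite ler_pdivrMr ?mulr_gt0 //.
by rewrite (_ : q / 4 * (4 * k) = q * k) //; field.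
Qed.
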